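(* For every integer $t \geq 1$, there exists a connected non-bipartite graph whose adjacency matrix has exactly five distinct eigenvalues and which has exactly $t$ distinct valencies (vertex degrees).
   Context: Eigenvalues of a graph are the eigenvalues of its adjacency matrix. Graphs are finite, simple and undirected. *)

(* Defs.v *)
From HB Require Import structures.
From mathcomp Require Import all_boot all_order all_algebra.
From mathcomp Require Import algC.
Set Implicit Arguments. Unset Strict Implicit. Unset Printing Implicit Defensive.
Import Order.TTheory GRing.Theory Num.Theory.
Local Open Scope ring_scope.

Definition simple_graph (T : finType) (e : rel T) : Prop :=
  symmetric e /\ irreflexive e.

Definition adj_mx (T : finType) (e : rel T) : 'M[algC]_#|T| :=
  \matrix_(i, j) (e (enum_val i) (enum_val j))%:R.

Definition num_distinct_eigenvalues (T : finType) (e : rel T) (k : nat) : Prop :=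
  exists s : seq algC, uniq s /\ size s = k /\
    forall a : algC, eigenvalue (adj_mx e) a <-> a \in s.

Definition connected_graph (T : finType) (e : rel T) : Prop :=
  (0 < #|T|)%N /\ forall x y : T, connect e x y.

Definition bipartite (T : finType) (e : rel T) : Prop :=
  exists f : T -> bool, forall x y, e x y -> f x != f y.

Definition degree (T : finType) (e : rel T) (x : T) : nat := #|[set y | e x y]|.

Definition num_valencies (T : finType) (e : rel T) : nat :=
  size (undup [seq degree e x | x <- enum T]).

(* Main.v *)
Require Import Defs.
From mathcomp Require Import all_boot all_order all_algebra.
From mathcomp Require Import algC.
Set Implicit Arguments. Unset Strict Implicit. Unset Printing Implicit Defensive.
Import Order.TTheory GRing.Theory Num.Theory.
Local Open Scope ring_scope.
From mathcomp Require Import zify ring.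

Lemma eigP (T : finType) (e : rel T) (a : algC) :
  eigenvalue (adj_mx e) a <->
  exists f : T -> algC, (exists x, f x != 0) /\
     forall y, \sum_x f x * (e x y)%:R = a * f y.
Proof.
have key : forall v : 'rV_#|T|, forall j,
  (v *m adj_mx e) 0 j = \sum_x v 0 (enum_rank x) * (e x (enum_val j))%:R.
  move=> v j; rewrite !mxE (big_enum_val (A:=T)) /=.
  by apply: eq_bigr => i _; rewrite !mxE enum_valK.
split.
  move/eigenvalueP=> [v Hv Hnz]; exists (fun x => v 0 (enum_rank x)); split.
    have [i Hi] : exists i, v 0 i != 0.
      apply/existsP; move: Hnz; apply: contraR; rewrite negb_exists => /forallP H.
      by apply/eqP/rowP => i; rewrite mxE; apply/eqP; have := H i; rewrite negbK.
    by exists (enum_val i); rewrite enum_valK.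
  move=> y; have := congr1 (fun M : 'rV_#|T| => M 0 (enum_rank y)) Hv.
  by rewrite key enum_rankK mxE => ->.
move=> [f [[x Hx] Hf]]; apply/eigenvalueP.
exists (\row_i f (enum_val i)).
  apply/rowP => j; rewrite key !mxE -Hf.
  by apply: eq_bigr => z _; rewrite mxE enum_rankK.
apply/eqP => /rowP /(_ (enum_rank x)); rewrite !mxE enum_rankK => H.
by rewrite H eqxx in Hx.
Qed.
Section Gen.
Variables (Kc Pp : finType) (sz : Kc * Pp -> nat).
Definition V := {b : Kc * Pp & 'I_(sz b)}.

Lemma sum_tag (R : nmodType) (G : V -> R) :
  \sum_(x : V) G x = \sum_b \sum_(j < sz b) G (Tagged _ j).
Proof.
rewrite (partition_big (fun x : V => tag x) predT) //.
apply: eq_bigr => b _.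
rewrite (big_tag (fun i (j : 'I_(sz i)) => G (Tagged _ j)) b).
apply: eq_bigr => x /eqP Hx; rewrite (untagE _ _ Hx).
by rewrite etaggedK.
Qed.

Definition hadj (x y : V) := ((tag x).1 == (tag y).1) && ((tag x).2 != (tag y).2).
Definition eG (x y : V) := (x != y) && ~~ hadj x y.

Lemma sum_cond (f : V -> algC) (P : pred V) :
  \sum_x f x * (P x)%:R = \sum_(x | P x) f x.
Proof. by rewrite [RHS]big_mkcond; apply: eq_bigr => x _; case: (P x); rewrite ?mulr1 ?mulr0. Qed.

Lemma eG_formula (f : V -> algC) z :
  \sum_x f x * (eG x z)%:R = \sum_x f x - \sum_(x | (tag x).1 == (tag z).1) f x
     + \sum_(x | tag x == tag z) f x - f z.
Proof.
have E : forall x, (eG x z)%:R = 1 - ((tag x).1 == (tag z).1)%:R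
     + (tag x == tag z)%:R - (x == z)%:R :> algC.
  move=> x; rewrite /eG /hadj.
  have -> : (tag x == tag z) = ((tag x).1 == (tag z).1) && ((tag x).2 == (tag z).2).
    by case: (tag x) (tag z) => [? ?] [? ?].
  case: (eqVneq x z) => [->|nxz]; rewrite ?eqxx /=; first by rewrite subrr add0r subrr.
  by case: eqP => _; case: eqP => _ /=; rewrite ?subr0 ?subrr ?add0r ?addr0.
transitivity (\sum_x (f x - f x * ((tag x).1 == (tag z).1)%:R
     + f x * (tag x == tag z)%:R - f x * (x == z)%:R)).
  by apply: eq_bigr; move=> x _; rewrite E !mulrDr !mulrN !mulr1.
rewrite !sumrB big_split /= !sum_cond big_pred1_eq sumrB sum_cond.
done.
Qed.

Definition sigma (g : Kc * Pp -> algC) := \sum_b (sz b)%:R * g b.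
Definition compS k (g : Kc * Pp -> algC) := \sum_(b | b.1 == k) (sz b)%:R * g b.

Lemma sum_blk (g : Kc * Pp -> algC) (P : pred (Kc * Pp)) :
  \sum_(x : V | P (tag x)) g (tag x) = \sum_(b | P b) (sz b)%:R * g b.
Proof.
rewrite big_mkcond sum_tag [RHS]big_mkcond; apply: eq_bigr => b _ /=.
rewrite sumr_const card_ord.
by case: (P b); rewrite ?mul0rn // mulr_natl.
Qed.

Lemma sum_blkT (g : Kc * Pp -> algC) :
  \sum_(x : V) g (tag x) = sigma g.
Proof. exact: (sum_blk g predT). Qed.

Lemma sum_blk1 (g : Kc * Pp -> algC) b :
  \sum_(x : V | tag x == b) g (tag x) = (sz b)%:R * g b.
Proof. by rewrite (sum_blk g (pred1 b)) big_pred1_eq. Qed.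

Lemma sum_blkC (g : Kc * Pp -> algC) k :
  \sum_(x : V | (tag x).1 == k) g (tag x) = compS k g.
Proof. by rewrite (sum_blk g (fun b => b.1 == k)). Qed.

Lemma eig_nec a f : (exists x, f x != 0) ->
  (forall z, \sum_x f x * (eG x z)%:R = a * f z) ->
  a = -1 \/ exists g, (exists b, (0 < sz b)%N /\ g b != 0) /\
     forall b, (a + 1) * g b = sigma g - compS b.1 g + (sz b)%:R * g b.
Proof.
move=> [x0 Hx0] Hf.
case: (eqVneq (a + 1) 0) => Ha.
  by left; apply/eqP; rewrite -addr_eq0 Ha.
right.
pose S := \sum_x f x.
pose C := fun k => \sum_(x | (tag x).1 == k) f x.
pose F := fun b => \sum_(x | tag x == b) f x.
pose g := fun b : Kc * Pp => (S - C b.1 + F b) / (a + 1).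
have Hfg : forall z, f z = g (tag z).
  move=> z; rewrite /g; apply: (canRL (mulfK Ha)).
  have := Hf z; rewrite eG_formula => H.
  by rewrite mulrDr mulr1 mulrC -H /S /C /F subrK.
have ES : S = sigma g by rewrite /S -sum_blkT; apply: eq_bigr => x _; rewrite Hfg.
have EC : forall k, C k = compS k g.
  by move=> k; rewrite /C -sum_blkC; apply: eq_bigr => x _; rewrite Hfg.
have EF : forall b, F b = (sz b)%:R * g b.
  by move=> b; rewrite /F -sum_blk1; apply: eq_bigr => x _; rewrite Hfg.
exists g; split.
  exists (tag x0); split; last by rewrite -Hfg.
  exact: (leq_ltn_trans (leq0n _) (ltn_ord (tagged x0))).
move=> b; rewrite -ES -EC -EF /g mulrC divfK //.
Qed.

Lemma eig_suff a g : (exists b, (0 < sz b)%N /\ g b != 0) ->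
  (forall b, (0 < sz b)%N -> (a + 1) * g b = sigma g - compS b.1 g + (sz b)%:R * g b) ->
  eigenvalue (adj_mx eG) a.
Proof.
move=> [b [Hb Hg]] Hall; apply/eigP; exists (fun z => g (tag z)); split.
  by exists (Tagged (fun b => 'I_(sz b)) (Ordinal Hb)).
move=> z; rewrite eG_formula sum_blkT sum_blkC sum_blk1 -Hall; last first.
  exact: (leq_ltn_trans (leq0n _) (ltn_ord (tagged z))).
by rewrite mulrDl mul1r addrK.
Qed.

Lemma eig_twin b : (1 < sz b)%N -> eigenvalue (adj_mx eG) (-1).
Proof.
move=> Hb.
have H0 : (0 < sz b)%N by apply: ltnW.
pose z0 := Tagged (fun b => 'I_(sz b)) (Ordinal H0).
pose z1 := Tagged (fun b => 'I_(sz b)) (Ordinal Hb).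
have Hz : z0 != z1 by rewrite eq_Tagged.
have S1 : forall (P : pred V) z, \sum_(x | P x) (x == z)%:R = (P z)%:R :> algC.
  move=> P z; rewrite -sum_cond.
  transitivity (\sum_x 1 * (x == z)%:R * (P z)%:R : algC).
    by apply: eq_bigr => x _; case: eqP => [->|_]; rewrite ?mul1r ?mul0r.
  by rewrite -mulr_suml sum_cond big_pred1_eq mul1r.
have HP : forall P : pred V, P z0 = P z1 ->
   \sum_(x | P x) ((x == z0)%:R - (x == z1)%:R) = 0 :> algC.
  by move=> P HP; rewrite sumrB !S1 HP subrr.
apply/eigP; exists (fun x => (x == z0)%:R - (x == z1)%:R); split.
  by exists z0; rewrite eqxx (negbTE Hz) subr0 oner_neq0.
move=> y; rewrite eG_formula (HP predT) // (HP (fun x => (tag x).1 == (tag y).1)) //.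
rewrite (HP (fun x => tag x == tag y)) // subrr add0r.
by rewrite mulN1r sub0r.
Qed.

Lemma eG_sym : symmetric eG.
Proof.
move=> x y; rewrite /eG /hadj eq_sym; congr (_ && ~~ (_ && _)); first by rewrite eq_sym.
by rewrite eq_sym.
Qed.

Lemma eG_irr : irreflexive eG.
Proof. by move=> x; rewrite /eG eqxx. Qed.

Lemma degree_eG z :
  (degree eG z + 1 + \sum_(b | (b.1 == (tag z).1) && (b.2 != (tag z).2)) sz b)%N = \sum_(x : V) 1.
Proof.

transitivity (\sum_(x : V) (eG z x + (x == z) + hadj z x))%N; last first.
  apply: eq_bigr => x _; rewrite /eG; case: (eqVneq x z) => [->|nxz].
    by rewrite /hadj !eqxx.
  by case: (hadj z x).
rewrite !big_split /=; congr (_ + _ + _)%N.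
- rewrite /degree -sum1_card big_mkcond /=.
  by apply: eq_bigr => x _; rewrite in_set; case: (eG z x).
- by rewrite big_mkcond /= (bigD1 z) //= big1 ?eqxx // => x /negbTE ->.
rewrite sum_tag big_mkcond /=; apply: eq_bigr => b _.
rewrite /hadj /= sum_nat_const card_ord [b.1 == _]eq_sym [b.2 == _]eq_sym.
by case: ((tag z).1 == b.1); case: ((tag z).2 == b.2); rewrite /= ?muln1 ?muln0.
Qed.

Lemma compS_pair k g : compS k g = \sum_p (sz (k, p))%:R * g (k, p).
Proof.
rewrite /compS.
transitivity (\sum_(i | i == k) \sum_(j | true) (sz (i, j))%:R * g (i, j)).
  by rewrite pair_big_dep; apply: eq_big => [[i j]|[i j] _] //=; rewrite andbT.
by rewrite big_pred1_eq.
Qed.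

Lemma tagP_gt0 (x : V) : (0 < sz (tag x))%N.
Proof. exact: (leq_ltn_trans (leq0n _) (ltn_ord (tagged x))). Qed.

Lemma eG_diff (x y : V) : (tag x).1 != (tag y).1 -> eG x y.
Proof.
move=> H; rewrite /eG /hadj (negbTE H) andbT /=.
by apply: contra H => /eqP ->.
Qed.

Lemma conn_gen : (forall k : Kc, exists b, b.1 != k /\ (0 < sz b)%N) ->
  forall x y : V, connect eG x y.
Proof.
move=> Hk x y.
case: (eqVneq (tag x).1 (tag y).1) => Hxy; last by apply: connect1; apply: eG_diff.
have [b [Hb1 Hb2]] := Hk (tag x).1.
pose z := Tagged (fun b => 'I_(sz b)) (Ordinal Hb2).
apply: (@connect_trans _ _ z); apply: connect1; apply: eG_diff => //=.
  by rewrite eq_sym.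
by rewrite -Hxy.
Qed.

Lemma nonbip_gen b b' : (1 < sz b)%N -> b'.1 != b.1 -> (0 < sz b')%N -> ~ bipartite eG.
Proof.
move=> Hb Hbb Hb'.
have H0 : (0 < sz b)%N by apply: ltnW.
pose z0 := Tagged (fun b => 'I_(sz b)) (Ordinal H0).
pose z1 := Tagged (fun b => 'I_(sz b)) (Ordinal Hb).
pose z2 := Tagged (fun b => 'I_(sz b)) (Ordinal Hb').
have E01 : eG z0 z1 by rewrite /eG eq_Tagged /= /hadj /= !eqxx.
have E02 : eG z0 z2 by apply: eG_diff; rewrite eq_sym.
have E12 : eG z1 z2 by apply: eG_diff; rewrite eq_sym.
move=> [f Hf]; have := Hf _ _ E01; have := Hf _ _ E02; have := Hf _ _ E12.
by case: (f z0); case: (f z1); case: (f z2).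
Qed.
End Gen.
Lemma a1 (p q : nat) : (4 * p * q <= (p + q) * (p + q))%N.
Proof.
case: (leqP p q) => H.
  have [d ->] : exists d, q = (p + d)%N by exists (q - p)%N; lia.
  nia.
have [d ->] : exists d, p = (q + d)%N by exists (p - q)%N; lia.
nia.
Qed.
Lemma amgm (p q r : nat) : (p * q = r * r -> 2 * r <= p + q)%N.
Proof. move=> H. have H1 := a1 p q.
rewrite leqNgt; apply/negP => H2. have H3 : ((p + q) * (p + q) < (2 * r) * (2 * r))%N by apply: ltn_mul. nia. Qed.

Lemma sum_pair_bool (K : finType) (R : nmodType) (F : K * bool -> R) :
  \sum_b F b = \sum_k (F (k, true) + F (k, false)).
Proof.
transitivity (\sum_k \sum_s F (k, s)); last by apply: eq_bigr => k _; rewrite big_bool.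
by rewrite pair_bigA; apply: eq_bigr => -[k s].
Qed.

Lemma sum_pair_boolN (K : finType) (F : K * bool -> nat) :
  (\sum_b F b = \sum_k (F (k, true) + F (k, false)))%N.
Proof.
transitivity (\sum_k \sum_s F (k, s))%N; last by apply: eq_bigr => k _; rewrite big_bool.
by rewrite pair_bigA; apply: eq_bigr => -[k s].
Qed.

Lemma rt (y s p q g1 g2 r : algC) : y * g1 = s - q * g2 -> y * g2 = s - p * g1 -> p * q = r ^+ 2 ->
  (y ^+ 2 - r ^+ 2) * g1 = s * (y - q).
Proof. move=> H1 H2 H3.
have -> : (y ^+ 2 - r ^+ 2) * g1 = s * (y - q) + y * (y * g1 - (s - q * g2))
   - q * (y * g2 - (s - p * g1)) + (p * q - r ^+ 2) * g1 by ring.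
by rewrite H1 H2 H3 !subrr; ring.
Qed.

Section Big.
Variable t : nat.
Hypothesis Ht : (1 < t)%N.
Definition Kb := ('I_t * bool)%type.
Definition szA (b : Kb * bool) : nat :=
  if b.2 then (4 ^ b.1.1)%N else (4 ^ (t.-1 - b.1.1))%N.
Definition rN := (2 ^ t.-1)%N.

Lemma four_r : (4 ^ t.-1 = rN * rN)%N.
Proof. by rewrite /rN -expnD addnn -mul2n expnM. Qed.

Lemma szA_prod k : (szA (k, true) * szA (k, false) = rN * rN)%N.
Proof.
rewrite /szA /= -expnD subnKC ?four_r //.
by have := ltn_ord k.1; lia.
Qed.

Definition Nn := (\sum_(b : Kb * bool) szA b)%N.
Definition Kn := (\sum_(b : Kb * bool) szA b * szA (b.1, ~~ b.2))%N.

Lemma Kn_val : Kn = (t * 2 * 2 * (rN * rN))%N.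
Proof.
rewrite /Kn (eq_bigr (fun _ => rN * rN)%N); last first.
  by move=> [k [|]] _ /=; rewrite ?szA_prod // mulnC szA_prod.
by rewrite sum_nat_const !card_prod card_ord card_bool.
Qed.

Lemma rN_ge2 : (2 <= rN)%N.
Proof. rewrite /rN; apply: (@leq_trans (2 ^ 1)) => //; apply: leq_pexp2l => //; lia. Qed.

Lemma Kn_lt : (Kn < Nn * rN)%N.
Proof.
have t0 : (0 < t)%N by apply: ltnW.
rewrite /Kn /Nn !(sum_pair_boolN (K := Kb)) big_distrl /=.
pose k0 : Kb := (Ordinal t0, false).
rewrite (bigD1 k0) //= [X in (_ < X)%N](bigD1 k0) //=.
apply: leq_ltn_trans (_ : _ <= _ + \sum_(i | i != k0) (szA (i,true) + szA (i,false)) * rN)%N _.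
  apply: leq_add => //; apply: leq_sum => k _; rewrite [(szA (k,false) * _)%N]mulnC szA_prod.
  have H := amgm (szA_prod k); by rewrite addnn -mul2n mulnA leq_mul2r H orbT.
rewrite ltn_add2r szA_prod /szA /= subn0 expn0 four_r.
have := rN_ge2; nia.
Qed.

Definition rr : algC := rN%:R.
Definition Nc : algC := Nn%:R.
Definition Kc : algC := Kn%:R.
Definition Dc : algC := Nc ^+ 2 - 4 * (Kc - rr ^+ 2).
Definition y1 : algC := (Nc + sqrtC Dc) / 2.
Definition y2 : algC := (Nc - sqrtC Dc) / 2.
Definition specA : seq algC := [:: -1; rr - 1; - rr - 1; y1 - 1; y2 - 1].

Lemma two_neq0 : (2 : algC) != 0.
Proof. by rewrite pnatr_eq0. Qed.

Lemma root_y y : (y - y1) * (y - y2) = y ^+ 2 - Nc * y + (Kc - rr ^+ 2).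
Proof.
have H2 := two_neq0.
have -> : (y - y1) * (y - y2) = y ^+ 2 - Nc * y + (Nc ^+ 2 - sqrtC Dc ^+ 2) / 4.
  by rewrite /y1 /y2; field.
by rewrite sqrtCK /Dc; field.
Qed.

Lemma Hp k : (szA (k, true))%:R * (szA (k, false))%:R = rr ^+ 2 :> algC.
Proof. by rewrite -natrM szA_prod natrM expr2. Qed.

Lemma Hps k s : (szA (k, s))%:R * (szA (k, ~~ s))%:R = rr ^+ 2 :> algC.
Proof. by case: s; rewrite /= ?Hp // mulrC Hp. Qed.

Lemma blk_rhs (g : Kb * bool -> algC) k s :
  sigma szA g - compS szA k g + (szA (k, s))%:R * g (k, s) =
  sigma szA g - (szA (k, ~~ s))%:R * g (k, ~~ s).
Proof. by rewrite compS_pair big_bool; case: s => /=; ring. Qed.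

Lemma Nc_sum : Nc = \sum_b (szA b)%:R.
Proof. by rewrite /Nc /Nn natr_sum. Qed.

Lemma Kc_sum : Kc = \sum_b (szA b)%:R * (szA (b.1, ~~ b.2))%:R.
Proof. by rewrite /Kc /Kn natr_sum; apply: eq_bigr => b _; rewrite natrM. Qed.

Lemma necA a : eigenvalue (adj_mx (@eG _ _ szA)) a -> a \in specA.
Proof.
move/eigP => [f [Hnz Hf]].
case: (eig_nec Hnz Hf) => [->|[g [[b0 [Hb0 Hg0]] Hsys]]]; first by rewrite inE eqxx.
move: Hsys; set y := a + 1 => Hsys.
have Ha : a = y - 1 by rewrite /y addrK.
have Hs : forall k s, y * g (k, s) = sigma szA g - (szA (k, ~~ s))%:R * g (k, ~~ s).
  by move=> k s; rewrite Hsys /= blk_rhs.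
case: (eqVneq (y ^+ 2) (rr ^+ 2)) => Hy.
  move/eqP: Hy; rewrite -subr_eq0 subr_sqr mulf_eq0 => /orP [] H.
    by move: H; rewrite subr_eq0 => /eqP Hy; rewrite Ha Hy !inE eqxx orbT.
  by move: H; rewrite addr_eq0 => /eqP Hy; rewrite Ha Hy !inE eqxx !orbT.
have Hy' : y ^+ 2 - rr ^+ 2 != 0 by rewrite subr_eq0.
have Hg : forall b, (y ^+ 2 - rr ^+ 2) * g b = sigma szA g * (y - (szA (b.1, ~~ b.2))%:R).
  move=> [k s] /=.
  have H1 := Hs k s; have H2 := Hs k (~~ s); rewrite negbK in H2.
  have H3 := Hps k s.
  exact: rt H1 H2 H3.
have Hsig : (y ^+ 2 - rr ^+ 2) * sigma szA g = (y * Nc - Kc) * sigma szA g.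
  transitivity (\sum_b (szA b)%:R * ((y ^+ 2 - rr ^+ 2) * g b)).
    by rewrite /sigma mulr_sumr; apply: eq_bigr => b _; ring.
  transitivity (sigma szA g * \sum_b ((szA b)%:R * y - (szA b)%:R * (szA (b.1, ~~ b.2))%:R)).
    by rewrite mulr_sumr; apply: eq_bigr => b _; rewrite Hg; ring.
  by rewrite sumrB -mulr_suml -Nc_sum -Kc_sum; ring.
have Hsig0 : sigma szA g != 0.
  apply: contra Hg0 => /eqP H0.
  by have := Hg b0; rewrite H0 mul0r => /eqP; rewrite mulf_eq0 (negbTE Hy').
have Hq := mulIf Hsig0 Hsig.
have : (y - y1) * (y - y2) = 0.
  have Hy2 : y ^+ 2 = y * Nc - Kc + rr ^+ 2 by rewrite -Hq; ring.
  by rewrite root_y Hy2; ring.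
move/eqP; rewrite mulf_eq0 => /orP [] H; move: H; rewrite subr_eq0 => /eqP Hy2.
  by rewrite Ha Hy2 !inE eqxx !orbT.
by rewrite Ha Hy2 !inE eqxx !orbT.
Qed.

Lemma t0 : (0 < t)%N.
Proof. exact: ltnW. Qed.
Definition k0 : Kb := (Ordinal t0, false).

Lemma szA_k0T : szA (k0, true) = 1%N.
Proof. by rewrite /szA /= expn0. Qed.
Lemma szA_k0F : szA (k0, false) = (rN * rN)%N.
Proof. by rewrite /szA /= subn0 four_r. Qed.

Lemma szA_gt0 b : (0 < szA b)%N.
Proof. by rewrite /szA; case: b.2; rewrite expn_gt0. Qed.

Definition flipb (b : Kb * bool) : Kb * bool := ((b.1.1, ~~ b.1.2), b.2).
Lemma flipbK : involutive flipb.
Proof. by move=> [[i c] s]; rewrite /flipb /= negbK. Qed.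

Lemma sigma_flip (g : Kb * bool -> algC) :
  (forall b, g (flipb b) = - g b) -> sigma szA g = 0.
Proof.
move=> Hg.
have E : sigma szA g = - sigma szA g.
  rewrite {1}/sigma (reindex_inj (inv_inj flipbK)) /sigma -sumrN.
  by apply: eq_bigr => b _; rewrite Hg mulrN.
move/eqP: E; rewrite -addr_eq0 -mulr2n mulrn_eq0 /=.
by move/eqP.
Qed.

Definition sgn (c : bool) : algC := if c then 1 else -1.

Lemma rr_neq0 : rr != 0.
Proof. by rewrite /rr pnatr_eq0 -lt0n; apply: leq_trans rN_ge2. Qed.

Lemma suff_r : eigenvalue (adj_mx (@eG _ _ szA)) (rr - 1).
Proof.
pose g := fun b : Kb * bool => sgn b.1.2 * (if b.2 then (szA (b.1, false))%:R else - rr).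
have Hs : sigma szA g = 0.
  by apply: sigma_flip => -[[i c] s]; rewrite /g /flipb /=; case: c; rewrite /sgn /= ?mulN1r ?mul1r ?opprK.
apply: (@eig_suff _ _ _ _ g).
  exists (k0, true); split; first exact: szA_gt0.
  by rewrite /g /= /sgn mulN1r oppr_eq0 szA_k0F pnatr_eq0 muln_eq0 orbb -lt0n; apply: leq_trans rN_ge2.
move=> [k s] _; rewrite subrK blk_rhs Hs sub0r /g /=.
have Hpk := Hp k.
case: s => /=.
  by ring.
apply/eqP; rewrite -subr_eq0.
have -> : rr * (sgn k.2 * - rr) - - ((szA (k, true))%:R * (sgn k.2 * (szA (k, false))%:R))
   = sgn k.2 * ((szA (k, true))%:R * (szA (k, false))%:R - rr ^+ 2) by ring.
by rewrite Hpk subrr mulr0.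
Qed.

Lemma suff_mr : eigenvalue (adj_mx (@eG _ _ szA)) (- rr - 1).
Proof.
pose g := fun b : Kb * bool => sgn b.1.2 * (if b.2 then (szA (b.1, false))%:R else rr).
have Hs : sigma szA g = 0.
  by apply: sigma_flip => -[[i c] s]; rewrite /g /flipb /=; case: c; rewrite /sgn /= ?mulN1r ?mul1r ?opprK.
apply: (@eig_suff _ _ _ _ g).
  exists (k0, true); split; first exact: szA_gt0.
  by rewrite /g /= /sgn mulN1r oppr_eq0 szA_k0F pnatr_eq0 muln_eq0 orbb -lt0n; apply: leq_trans rN_ge2.
move=> [k s] _; rewrite subrK blk_rhs Hs sub0r /g /=.
have Hpk := Hp k.
case: s => /=.
  by ring.
apply/eqP; rewrite -subr_eq0.
have -> : - rr * (sgn k.2 * rr) - - ((szA (k, true))%:R * (sgn k.2 * (szA (k, false))%:R))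
   = sgn k.2 * ((szA (k, true))%:R * (szA (k, false))%:R - rr ^+ 2) by ring.
by rewrite Hpk subrr mulr0.
Qed.

Lemma suff_root y : y ^+ 2 = y * Nc - Kc + rr ^+ 2 ->
  eigenvalue (adj_mx (@eG _ _ szA)) (y - 1).
Proof.
move=> Hy.
pose g := fun b : Kb * bool => y - (szA (b.1, ~~ b.2))%:R.
have Hs : sigma szA g = y * Nc - Kc.
  rewrite /sigma Nc_sum Kc_sum mulr_sumr -sumrB; apply: eq_bigr => b _.
  by rewrite /g; ring.
apply: (@eig_suff _ _ _ _ g).
  case: (eqVneq y 1) => Hy1.
    exists (k0, true); split; first exact: szA_gt0.
    rewrite /g /= szA_k0F Hy1 subr_eq0 eq_sym pnatr_eq1.
    by apply/negP => /eqP H; have := rN_ge2; nia.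
  exists (k0, false); split; first exact: szA_gt0.
  by rewrite /g /= szA_k0T subr_eq0.
move=> [k s] _; rewrite subrK blk_rhs Hs /g /= negbK.
have Hpk := Hps k s.
apply/eqP; rewrite -subr_eq0.
have -> : y * (y - (szA (k, ~~ s))%:R) - (y * Nc - Kc - (szA (k, ~~ s))%:R * (y - (szA (k, s))%:R))
   = (y ^+ 2 - (y * Nc - Kc + rr ^+ 2)) - ((szA (k, s))%:R * (szA (k, ~~ s))%:R - rr ^+ 2) by ring.
by rewrite Hy Hpk !subrr.
Qed.

Lemma y_root y : (y - y1) * (y - y2) = 0 -> y ^+ 2 = y * Nc - Kc + rr ^+ 2.
Proof.
rewrite root_y => H.
have -> : y ^+ 2 = (y ^+ 2 - Nc * y + (Kc - rr ^+ 2)) + Nc * y - Kc + rr ^+ 2 by ring.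
by rewrite H; ring.
Qed.

Lemma y1_root : y1 ^+ 2 = y1 * Nc - Kc + rr ^+ 2.
Proof. by apply: y_root; rewrite subrr mul0r. Qed.
Lemma y2_root : y2 ^+ 2 = y2 * Nc - Kc + rr ^+ 2.
Proof. by apply: y_root; rewrite subrr mulr0. Qed.

Lemma Nn_big : (4 * t * rN < Nn)%N.
Proof.
have H := Kn_lt; rewrite Kn_val in H.
have H2 := rN_ge2.
rewrite -(@ltn_pmul2r rN); last by apply: leq_trans H2.
by apply: leq_trans H; rewrite -mulnA mulnA; nia.
Qed.

Lemma y_facts y : y ^+ 2 = y * Nc - Kc + rr ^+ 2 -> [/\ y != 0, y != rr & y != - rr].
Proof.
move=> Hy; have H2 := rN_ge2; have HK := Kn_lt; rewrite Kn_val in HK.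
split.
- apply/eqP => H0; move: Hy; rewrite H0 expr0n mul0r sub0r /= => /eqP.
  rewrite eq_sym -subr_eq0 subr0 addrC subr_eq0 /Kc /rr -natrX eqr_nat => /eqP HK0.
  by rewrite Kn_val in HK0; nia.
- apply/eqP => H0; move: Hy; rewrite H0 => /eqP.
  rewrite -subr_eq0 (_ : rr ^+ 2 - (rr * Nc - Kc + rr ^+ 2) = Kc - rr * Nc); last by ring.
  rewrite subr_eq0 /Kc /rr /Nc -natrM eqr_nat Kn_val => /eqP HK0.
  by rewrite HK0 mulnC ltnn in HK.
- apply/eqP => H0; move: Hy; rewrite H0 => /eqP.
  rewrite -subr_eq0 (_ : (- rr) ^+ 2 - (- rr * Nc - Kc + rr ^+ 2) = Kc + rr * Nc); last by ring.
  rewrite /Kc /rr /Nc -natrM -natrD pnatr_eq0 Kn_val => /eqP HK0.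
  by nia.
Qed.

Lemma uniq_specA : uniq specA.
Proof.
have -> : specA = map (fun x => x - 1) [:: 0; rr; - rr; y1; y2] by rewrite /specA /= sub0r.
rewrite map_inj_uniq; last by move=> x z /addIr.
have [A1 A2 A3] := y_facts y1_root.
have [B1 B2 B3] := y_facts y2_root.
have R0 := rr_neq0.
have R1 : rr != - rr.
  by rewrite -addr_eq0 -mulr2n mulrn_eq0 /= (negbTE R0).
have Y12 : y1 != y2.
  apply/eqP => H; have : y1 - y2 = 0 by rewrite H subrr.
  have -> : y1 - y2 = sqrtC Dc by rewrite /y1 /y2; field.
  move/eqP; rewrite sqrtC_eq0 /Dc subr_eq0 /Nc /Kc /rr.
  rewrite -!natrX -natrB; last by rewrite Kn_val; nia.
  rewrite -natrM eqr_nat => /eqP H1.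
  have H2 := Nn_big; have H3 := rN_ge2; rewrite Kn_val in H1.
  nia.
rewrite /= !inE !negb_or.
have E : forall x y : algC, (x != y) = (y != x) by move=> x y; rewrite eq_sym.
by rewrite (E 0 rr) (E 0 (-rr)) (E 0 y1) (E 0 y2) (E rr y1) (E rr y2) (E (-rr) y1) (E (-rr) y2) oppr_eq0 R0 A1 B1 R1 A2 B2 A3 B3 Y12.
Qed.

Lemma spec5A : num_distinct_eigenvalues (@eG _ _ szA) 5.
Proof.
exists specA; split; first exact: uniq_specA.
split; first by [].
move=> a; split; first exact: necA.
rewrite !inE => /orP [/eqP ->|/orP [/eqP ->|/orP [/eqP ->|/orP [/eqP ->|/eqP ->]]]].
- by apply: (@eig_twin _ _ szA (k0, false)); rewrite szA_k0F; have := rN_ge2; nia.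
- exact: suff_r.
- exact: suff_mr.
- exact: suff_root y1_root.
- exact: suff_root y2_root.
Qed.

Definition TotA := (\sum_(x : V szA) 1)%N.

Lemma degA z : degree (@eG _ _ szA) z = (TotA - 1 - szA ((tag z).1, ~~ (tag z).2))%N.
Proof.
have H := degree_eG z.
rewrite (big_pred1 ((tag z).1, ~~ (tag z).2)) in H; last first.
  move=> [k s] /=; rewrite /= xpair_eqE; congr (_ && _).
  by case: s; case: (tag z).2.
rewrite /TotA -H; lia.
Qed.

Lemma degA_lt (z : V szA) : (szA ((tag z).1, ~~ (tag z).2) < TotA)%N.
Proof.
have H := degree_eG z.
rewrite (big_pred1 ((tag z).1, ~~ (tag z).2)) in H; last first.
  move=> [k s] /=; rewrite /= xpair_eqE; congr (_ && _).
  by case: s; case: (tag z).2.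
rewrite /TotA -H; lia.
Qed.

Lemma valA : num_valencies (@eG _ _ szA) = t.
Proof.
pose D := fun j => (TotA - 1 - 4 ^ j)%N.
have Hw : forall j, (j < t)%N -> exists z : V szA, szA ((tag z).1, ~~ (tag z).2) = (4 ^ j)%N.
  move=> j Hj.
  have H0 : (0 < szA ((Ordinal Hj, false), false))%N by apply: szA_gt0.
  by exists (Tagged (fun b => 'I_(szA b)) (Ordinal H0)).
have Hlt : forall j, (j < t)%N -> (4 ^ j < TotA)%N.
  by move=> j Hj; have [z Hz] := Hw j Hj; rewrite -Hz; apply: degA_lt.
have Hu : uniq [seq D j | j <- iota 0 t].
  rewrite map_inj_in_uniq ?iota_uniq // => j1 j2; rewrite !mem_iota /= !add0n => H1 H2.
  rewrite /D => HD.
  have E : (4 ^ j1 = 4 ^ j2)%N.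
    have := Hlt _ H1; have := Hlt _ H2; lia.
  by apply/eqP; rewrite -(@eqn_exp2l 4) // E.
rewrite /num_valencies; set L := map _ _.
have Heq : undup L =i [seq D j | j <- iota 0 t].
  move=> d; rewrite mem_undup; apply/mapP/mapP.
    move=> [z _ ->]; rewrite degA /D.
    move: (tag z) => [[i c] s] /=; rewrite /szA /=; case: s => /=.
      exists (t.-1 - i)%N => //; rewrite mem_iota add0n; have := ltn_ord i; lia.
    by exists (nat_of_ord i) => //; rewrite mem_iota add0n ltn_ord.
  move=> [j]; rewrite mem_iota add0n /= => Hj ->.
  have [z Hz] := Hw j Hj.
  by exists z; rewrite ?mem_enum // degA Hz.
rewrite (perm_size (uniq_perm (undup_uniq _) Hu Heq)).
by rewrite size_map size_iota.
Qed.

Lemma mainA : exists (T : finType) (e : rel T),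
    [/\ simple_graph e, connected_graph e, ~ bipartite e,
        num_distinct_eigenvalues e 5 & num_valencies e = t].
Proof.
exists (V szA), (@eG _ _ szA); split.
- by split; [exact: eG_sym | exact: eG_irr].
- split.
    apply/card_gt0P.
    by exists (Tagged (fun b => 'I_(szA b)) (Ordinal (szA_gt0 (k0, true)))).
  apply: conn_gen => k; exists ((k.1, ~~ k.2), true); split; last exact: szA_gt0.
  by case: k => i c; rewrite /= xpair_eqE eqxx /=; case: c.
- apply: (@nonbip_gen _ _ szA (k0, false) ((Ordinal t0, true), true)).
  + by rewrite szA_k0F; have := rN_ge2; nia.
  + by [].
  + exact: szA_gt0.
- exact: spec5A.
- exact: valA.
Qed.
End Big.

Section Small.
Definition sz1 (b : bool * (bool * bool)) : nat :=
  if b.1 then (if b.2.1 && b.2.2 then 0 else 1)%N else (if b.2.1 == b.2.2 then 2 else 0)%N.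

Lemma sum_bb (R : nmodType) (F : bool * bool -> R) :
  \sum_p F p = F (true, true) + F (true, false) + (F (false, true) + F (false, false)).
Proof.
transitivity (\sum_i \sum_j F (i, j)); last by rewrite big_bool !big_bool.
by rewrite pair_bigA; apply: eq_bigr => -[i j].
Qed.

Lemma sum_bbb (R : nmodType) (F : bool * (bool * bool) -> R) :
  \sum_b F b = \sum_p F (true, p) + \sum_p F (false, p).
Proof.
transitivity (\sum_i \sum_j F (i, j)); last by rewrite big_bool.
by rewrite pair_bigA; apply: eq_bigr => -[i j].
Qed.

Definition spec1 : seq algC := [:: -1; 0; 1; -3; 4].

Lemma nec1 a : eigenvalue (adj_mx (@eG _ _ sz1)) a -> a \in spec1.
Proof.
move/eigP => [f [Hnz Hf]].
case: (eig_nec Hnz Hf) => [->|[g [[b0 [Hb0 Hg0]] Hsys]]]; first by rewrite inE eqxx.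
move: Hsys; set y := a + 1 => Hsys.
have Ha : a = y - 1 by rewrite /y addrK.
set u1 := g (false, (true, true)); set u2 := g (false, (false, false)).
set v1 := g (true, (true, false)); set v2 := g (true, (false, true)).
set v3 := g (true, (false, false)).
have Es : sigma sz1 g = 2 * u1 + 2 * u2 + v1 + v2 + v3.
  by rewrite /sigma sum_bbb !sum_bb /sz1 /= /u1 /u2 /v1 /v2 /v3; ring.
have E1 : y * u1 = sigma sz1 g - 2 * u2.
  by rewrite Hsys compS_pair sum_bb /sz1 /= /u1 /u2 /v1 /v2 /v3; ring.
have E2 : y * u2 = sigma sz1 g - 2 * u1.
  by rewrite Hsys compS_pair sum_bb /sz1 /= /u1 /u2 /v1 /v2 /v3; ring.
have E3 : y * v1 = sigma sz1 g - (v2 + v3).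
  by rewrite Hsys compS_pair sum_bb /sz1 /= /u1 /u2 /v1 /v2 /v3; ring.
have E4 : y * v2 = sigma sz1 g - (v1 + v3).
  by rewrite Hsys compS_pair sum_bb /sz1 /= /u1 /u2 /v1 /v2 /v3; ring.
have E5 : y * v3 = sigma sz1 g - (v1 + v2).
  by rewrite Hsys compS_pair sum_bb /sz1 /= /u1 /u2 /v1 /v2 /v3; ring.
have mem : forall c, a = c -> c \in spec1 -> a \in spec1 by move=> c ->.
case: (eqVneq y 1) => [Hy|Hy1].
  by apply: (mem 0); [rewrite Ha Hy; ring | rewrite !inE eqxx !orbT].
case: (eqVneq y 2) => [Hy|Hy2].
  by apply: (mem 1); [rewrite Ha Hy; ring | rewrite !inE eqxx !orbT].
case: (eqVneq y (-2)) => [Hy|Hy3].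
  by apply: (mem (-3)); [rewrite Ha Hy; ring | rewrite !inE eqxx !orbT].
case: (eqVneq y 5) => [Hy|Hy5].
  by apply: (mem 4); [rewrite Ha Hy; ring | rewrite !inE eqxx !orbT].
have cancel : forall c w1 w2, y - c != 0 -> (y - c) * (w1 - w2) = 0 -> w1 = w2.
  move=> c w1 w2 Hc /eqP; rewrite mulf_eq0 (negbTE Hc) /= subr_eq0 => /eqP //.
have Hv12 : v1 = v2.
  apply: (cancel 1) => //; first by rewrite subr_eq0.
  have -> : (y - 1) * (v1 - v2) = (y * v1 - y * v2) - (v1 - v2) by ring.
  by rewrite E3 E4; ring.
have Hv13 : v1 = v3.
  apply: (cancel 1) => //; first by rewrite subr_eq0.
  have -> : (y - 1) * (v1 - v3) = (y * v1 - y * v3) - (v1 - v3) by ring.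
  by rewrite E3 E5; ring.
have Hu12 : u1 = u2.
  apply: (cancel 2) => //; first by rewrite subr_eq0.
  have -> : (y - 2) * (u1 - u2) = (y * u1 - y * u2) - 2 * (u1 - u2) by ring.
  by rewrite E1 E2; ring.
have Huv : u1 = v1.
  apply: (cancel (-2)) => //; first by rewrite subr_eq0.
  have -> : (y - -2) * (u1 - v1) = (y * u1 - y * v1) + 2 * (u1 - v1) by ring.
  by rewrite E1 E3 -Hu12 -Hv12 -Hv13; ring.
have Hu0 : u1 = 0.
  apply: (cancel 5) => //; first by rewrite subr_eq0.
  have -> : (y - 5) * (u1 - 0) = y * u1 - 5 * u1 by ring.
  by rewrite E1 Es -Hu12 -Hv12 -Hv13 -Huv; ring.
move: Hb0 Hg0; case: b0 => -[] [[] []] //= _; rewrite -/u1 -/u2 -/v1 -/v2 -/v3.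
- by rewrite -Huv Hu0 eqxx.
- by rewrite -Hv12 -Huv Hu0 eqxx.
- by rewrite -Hv13 -Huv Hu0 eqxx.
- by rewrite Hu0 eqxx.
- by rewrite -Hu12 Hu0 eqxx.
Qed.

Ltac chk := rewrite /sigma compS_pair sum_bbb !sum_bb /sz1 /=; ring.

Lemma suff1 a : a \in spec1 -> eigenvalue (adj_mx (@eG _ _ sz1)) a.
Proof.
rewrite !inE => /orP [/eqP ->|/orP [/eqP ->|/orP [/eqP ->|/orP [/eqP ->|/eqP ->]]]].
- by apply: (@eig_twin _ _ sz1 (false, (true, true))).
- pose g := fun b : bool * (bool * bool) => match b with
    | (true, (true, false)) => 1 | (true, (false, true)) => -1 | _ => 0 end : algC.
  apply: (@eig_suff _ _ _ _ g).
    by exists (true, (true, false)); rewrite /g /= oner_eq0.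
  by move=> [[] [[] []]] //= _; rewrite /g; chk.
- pose g := fun b : bool * (bool * bool) => match b with
    | (false, (true, true)) => 1 | (false, (false, false)) => -1 | _ => 0 end : algC.
  apply: (@eig_suff _ _ _ _ g).
    by exists (false, (true, true)); rewrite /g /= oner_eq0.
  by move=> [[] [[] []]] //= _; rewrite /g; chk.
- pose g := fun b : bool * (bool * bool) => if b.1 then -4 else 3 : algC.
  apply: (@eig_suff _ _ _ _ g).
    by exists (false, (true, true)); rewrite /g /= pnatr_eq0.
  by move=> [[] [[] []]] //= _; rewrite /g; chk.
- pose g := fun b : bool * (bool * bool) => 1 : algC.
  apply: (@eig_suff _ _ _ _ g).
    by exists (false, (true, true)); rewrite /g /= oner_eq0.
  by move=> [[] [[] []]] //= _; rewrite /g; chk.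
Qed.

Lemma uniq_spec1 : uniq spec1.
Proof.
have -> : spec1 = map (fun n : nat => n%:R - 3 : algC) [:: 2; 3; 4; 0; 7]%N.
  by rewrite /spec1 /=; congr [:: _; _; _; _; _]; ring.
rewrite map_inj_uniq // => m n /addIr /eqP; rewrite eqr_nat => /eqP. done.
Qed.

Lemma deg1 (z : V sz1) : degree (@eG _ _ sz1) z = 4%N.
Proof.
have H := degree_eG z.
have E7 : (\sum_(x : V sz1) 1 = 7)%N.
  rewrite sum_tag (eq_bigr (fun b => sz1 b)); last first.
    by move=> b _; rewrite sum_nat_const card_ord muln1.
  by rewrite sum_bbb !sum_bb /sz1.
move: H; rewrite E7 big_mkcond sum_bbb !sum_bb /=.
move: (tag z) (tagP_gt0 z) => -[[] [[] []]] //= _; rewrite /sz1 /=; lia.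
Qed.

Lemma main1 : exists (T : finType) (e : rel T),
    [/\ simple_graph e, connected_graph e, ~ bipartite e,
        num_distinct_eigenvalues e 5 & num_valencies e = 1%N].
Proof.
have Hb : (0 < sz1 (false, (true, true)))%N by [].
exists (V sz1), (@eG _ _ sz1); split.
- by split; [exact: eG_sym | exact: eG_irr].
- split.
    by apply/card_gt0P; exists (Tagged (fun b => 'I_(sz1 b)) (Ordinal Hb)).
  apply: conn_gen => -[].
    by exists (false, (true, true)).
  by exists (true, (true, false)).
- by apply: (@nonbip_gen _ _ sz1 (false, (true, true)) (true, (true, false))).
- exists spec1; split; first exact: uniq_spec1.
  split; first by [].
  by move=> a; split; [exact: nec1 | exact: suff1].
- rewrite /num_valencies; set L := map _ _.
  have Heq : undup L =i [:: 4%N].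
    move=> d; rewrite mem_undup inE; apply/mapP/eqP.
      by move=> [z _ ->]; rewrite deg1.
    move=> ->; exists (Tagged (fun b => 'I_(sz1 b)) (Ordinal Hb)); first by rewrite mem_enum.
    by rewrite deg1.
  by rewrite (perm_size (uniq_perm (undup_uniq _) _ Heq)).
Qed.
End Small.

Local Close Scope ring_scope.

Theorem theorem3 (t : nat) : (1 <= t)%N ->
  exists (T : finType) (e : rel T),
    [/\ simple_graph e, connected_graph e, ~ bipartite e,
        num_distinct_eigenvalues e 5 & num_valencies e = t].
Proof.
move=> Ht; case: (leqP t 1) => H.
  have -> : t = 1 by apply/eqP; rewrite eqn_leq H Ht.
  exact: main1.
exact: (mainA H).
Qed.
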